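(* Let $n\ge3$, $b\in\mathbb{R}^n$, $K\in\{0,\ldots,n-3\}$, $\gamma>0$, and let $x^*$ be a d-stationary point of $$\min_{x\in\mathbb{R}^n}\ \tfrac12\|b-x\|_2^2+\gamma T_{K,n-2,1}(D^{(2,n)}x).$$ Let $X\in\mathbb{R}^{n\times2}$ be the matrix whose $i$-th row is $(1,i)$ and $\hat b=X(X^\top X)^{-1}X^\top b$. If $$\gamma>\frac{\|b-\hat b\|_2}{2\sqrt{(1-\cos\frac{\pi}{n})(1-\cos\frac{\pi}{n-1})}},$$ then $T_{K,n-2,1}(D^{(2,n)}x^* )=0$.
   Context: $D^{(2,n)}\in\mathbb{R}^{(n-2)\times n}$ is the second-order difference matrix: its $i$-th row has entries $1,-2,1$ in columns $i,i+1,i+2$ and zeros elsewhere. $T_{K,m,1}(z)$ for $z\in\mathbb{R}^m$ is the sum of the $m-K$ smallest values among $|z_1|,\ldots,|z_m|$. A point is d-stationary if the directional derivative of the objective there is $\ge0$ in every direction. *)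

(* Defs.v *)
From HB Require Import structures.
From mathcomp Require Import all_boot all_order all_algebra.
From mathcomp Require Import all_classical all_reals all_analysis.
Set Implicit Arguments. Unset Strict Implicit. Unset Printing Implicit Defensive.
Import Order.TTheory GRing.Theory Num.Theory.
Import numFieldNormedType.Exports.
Local Open Scope classical_set_scope.
Local Open Scope ring_scope.

Section Defs.
Variable R : realType.

Definition diff2 (n : nat) : 'M[R]_(n - 2, n) :=
  \matrix_(i < n - 2, j < n)
    (if j == i :> nat then 1
     else if j == i.+1 :> nat then -2
     else if j == i.+2 :> nat then 1 else 0).

Definition trunc_l1 (K m : nat) (z : 'cV[R]_m) : R :=
  \sum_(a <- take (m - K) (sort <=%R [seq `|z i 0| | i <- enum 'I_m])) a.

Definition norm2 (n : nat) (v : 'cV[R]_n) : R :=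
  Num.sqrt (\sum_(i < n) v i 0 ^+ 2).

Definition objective (n K : nat) (b : 'cV[R]_n) (gamma : R) (x : 'cV[R]_n) : R :=
  2^-1 * norm2 (b - x) ^+ 2 + gamma * trunc_l1 K (diff2 n *m x).

Definition dir_deriv_is (n : nat) (f : 'cV[R]_n -> R) (x d : 'cV[R]_n) (l : R) : Prop :=
  (fun t : R => (f (x + t *: d) - f x) / t) @ 0^'+ --> l.

Definition d_stationary (n : nat) (f : 'cV[R]_n -> R) (x : 'cV[R]_n) : Prop :=
  forall d : 'cV[R]_n, exists l : R, dir_deriv_is f x d l /\ 0 <= l.

Definition design (n : nat) : 'M[R]_(n, 2) :=
  \matrix_(i < n, j < 2) (if j == 0 :> nat then 1 else (i.+1)%:R).

Definition bhat (n : nat) (b : 'cV[R]_n) : 'cV[R]_n :=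
  design n *m invmx ((design n)^T *m design n) *m (design n)^T *m b.

End Defs.

(* Main.v *)
Require Import Defs.
From HB Require Import structures.
From mathcomp Require Import all_boot all_order all_algebra.
From mathcomp Require Import all_classical all_reals all_analysis.
From mathcomp Require Import perm.
From mathcomp Require Import ring lra zify.
Import Order.TTheory GRing.Theory Num.Theory.
Import numFieldNormedType.Exports.
Local Open Scope ring_scope.

Section A.
Variable R : realType.

Lemma dirichlet (m : nat) (Y : nat -> R) : (1 < m)%N -> Y 0%N = 0 -> Y m = 0 ->
  (2 - 2 * cos (pi / m%:R)) * \sum_(i < m) Y i ^+ 2 <= \sum_(i < m) (Y i.+1 - Y i) ^+ 2.
Proof.
move=> m1 Y0 Ym.
set th := pi / m%:R.
pose phi (i : nat) := sin (i%:R * th).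
have mR : (m%:R : R) != 0 by rewrite pnatr_eq0 -lt0n ltnW.
have phi0 : phi 0%N = 0 by rewrite /phi mul0r sin0.
have phim : phi m = 0 by rewrite /phi /th mulrC divfK // sinpi.
have phipos i : (0 < i)%N -> (i < m)%N -> 0 < phi i.
  move=> i0 im; apply: sin_gt0_pi; apply/andP; split.
    by rewrite mulr_gt0 // ?ltr0n // divr_gt0 ?pi_gt0 // ltr0n ltnW.
  rewrite /th mulrCA gtr_pMr ?pi_gt0 // ltr_pdivrMr ?ltr0n ?mul1r ?ltr_nat //.
  by rewrite ltnW.
have rec j : phi j + phi j.+2 = 2 * cos th * phi j.+1.
  rewrite /phi.
  have -> : (j.+2%:R : R) * th = j.+1%:R * th + th by rewrite -addn1 natrD mulrDl mul1r.
  have -> : (j%:R : R) * th = j.+1%:R * th - th by rewrite -addn1 natrD mulrDl mul1r addrK.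
  rewrite sinB sinD; ring.
pose a i := 1 - phi i.-1 / phi i.
pose bb i := 1 - phi i.+1 / phi i.
have edge i : (i < m)%N -> a i.+1 * Y i.+1 ^+ 2 + bb i * Y i ^+ 2 <= (Y i.+1 - Y i) ^+ 2.
  move=> im; case: i im => [|i] im.
    by rewrite Y0 /a /= phi0 mul0r subr0 mul1r expr0n /= mulr0 addr0 subr0.
  have [ei|ne] := eqVneq i.+2 m.
    rewrite /a /bb /= ei Ym phim mul0r subr0 mul1r expr0n /= mulr0 add0r sub0r sqrrN. done.
  have p1 : 0 < phi i.+1 by apply: phipos.
  have p2 : 0 < phi i.+2 by apply: phipos; rewrite // ltn_neqAle ne im.
  rewrite /a /bb /= -subr_ge0.
  have -> : (Y i.+2 - Y i.+1) ^+ 2 - ((1 - phi i.+1 / phi i.+2) * Y i.+2 ^+ 2 +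
     (1 - phi i.+2 / phi i.+1) * Y i.+1 ^+ 2) =
     (phi i.+1 * Y i.+2 - phi i.+2 * Y i.+1) ^+ 2 / (phi i.+1 * phi i.+2).
    field; apply/andP; split; by rewrite gt_eqF.
  by rewrite divr_ge0 ?sqr_ge0 // mulr_ge0 // ltW.
apply: (@le_trans _ _ (\sum_(i < m) (a i.+1 * Y i.+1 ^+ 2 + bb i * Y i ^+ 2))); last first.
  by apply: ler_sum => i _; apply: edge.
rewrite big_split /=.
have shift : \sum_(i < m) a i.+1 * Y i.+1 ^+ 2 = \sum_(i < m) a i * Y i ^+ 2.
  have e1 : \sum_(i < m.+1) a i * Y i ^+ 2 = a 0%N * Y 0%N ^+ 2 + \sum_(i < m) a i.+1 * Y i.+1 ^+ 2.
    by rewrite big_ord_recl.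
  have e2 : \sum_(i < m.+1) a i * Y i ^+ 2 = \sum_(i < m) a i * Y i ^+ 2 + a m * Y m ^+ 2.
    by rewrite big_ord_recr.
  rewrite e1 in e2. rewrite Y0 Ym expr0n /= !mulr0 add0r addr0 in e2.
  rewrite -[RHS]e2; apply: eq_bigr => i _ //.
rewrite shift -big_split /= mulr_sumr; rewrite le_eqVlt; apply/orP; left; apply/eqP; apply: eq_bigr => -[i im] _ /=.
case: i im => [|i] im; first by rewrite Y0; ring.
have p1 : 0 < phi i.+1 by apply: phipos.
rewrite -mulrDl; congr (_ * _).
rewrite /a /bb /=.
have := rec i; move=> h.
apply/eqP; rewrite -subr_eq0; apply/eqP.
have -> : 2 - 2 * cos th - (1 - phi i / phi i.+1 + (1 - phi i.+2 / phi i.+1))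
   = (phi i + phi i.+2 - 2 * cos th * phi i.+1) / phi i.+1.
  by field; rewrite gt_eqF.
by rewrite h subrr mul0r.
Qed.

Lemma lam_pos (m : nat) : (1 < m)%N -> 0 < 2 - 2 * cos (pi / m%:R) :> R.
Proof.
move=> m1.
have s0 : 0 < sin (pi / m%:R) :> R.
  apply: sin_gt0_pi; apply/andP; split.
    by rewrite divr_gt0 ?pi_gt0 // ltr0n ltnW.
  by rewrite gtr_pMr ?pi_gt0 // invf_lt1 ?ltr0n ?ltr1n // ltnW.
have c1 : cos (pi / m%:R) < 1 :> R.
  have h := @cos2Dsin2 R (pi / m%:R).
  have : cos (pi / m%:R) ^+ 2 < 1 :> R by have := exprn_gt0 2 s0; lra.
  by move=> hc; rewrite expr2 in hc; nra.
lra.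
Qed.

Lemma diff1_inv (m : nat) (e : nat -> R) : (1 < m)%N ->
  exists u : nat -> R, (forall i, (i < m.-1)%N -> u i.+1 - u i = e i) /\
    (2 - 2 * cos (pi / m%:R)) * \sum_(i < m) u i ^+ 2 <= \sum_(i < m.-1) e i ^+ 2.
Proof.
move=> m1.
pose P (k : nat) := \sum_(j < k) e j.
pose c := - (\sum_(k < m) P k) / m%:R.
pose u k := c + P k.
have mR : (m%:R : R) != 0 by rewrite pnatr_eq0 -lt0n ltnW.
exists u; split.
  by move=> i _; rewrite /u /P big_ord_recr /=; ring.
set lam := 2 - 2 * cos (pi / m%:R).
have lp : 0 < lam by apply: lam_pos.
pose Y (k : nat) := \sum_(j < k) u j.
have Y0 : Y 0%N = 0 by rewrite /Y big_ord0.
have Ym : Y m = 0.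
  rewrite /Y /u big_split /= sumr_const card_ord /c.
  by rewrite -mulr_natr; field.
have uY j : u j = Y j.+1 - Y j by rewrite /Y big_ord_recr /= addrAC subrr add0r.
have hA := @dirichlet m Y m1 Y0 Ym.
set S := \sum_(i < m) u i ^+ 2.
have SY : S = \sum_(i < m) (Y i.+1 - Y i) ^+ 2 by apply: eq_bigr => i _; rewrite uY.
have [m' em] : exists m', m = m'.+1 by exists m.-1; rewrite prednK // ltnW.
subst m; rewrite /=.
have Sform : S = - \sum_(j < m') e j * Y j.+1.
  have -> : S = \sum_(j < m'.+1) u j * (Y j.+1 - Y j).
    by apply: eq_bigr => j _; rewrite -uY.
  have -> : \sum_(j < m'.+1) u j * (Y j.+1 - Y j) =
      \sum_(j < m'.+1) u j * Y j.+1 - \sum_(j < m'.+1) u j * Y j.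
    by rewrite -sumrB; apply: eq_bigr => j _; rewrite mulrBr.
  rewrite big_ord_recr /= Ym mulr0 addr0 big_ord_recl /= Y0 mulr0 add0r.
  rewrite -sumrB -sumrN; apply: eq_bigr => j _.
  have := ltn_ord j => jl.
  have <- : u j.+1 - u j = e j by rewrite /u /P big_ord_recr /=; ring.
  by rewrite /=; ring.
set YY := \sum_(i < m'.+1) Y i ^+ 2.
set E := \sum_(i < m') e i ^+ 2.
have YYs : YY = \sum_(j < m') Y j.+1 ^+ 2 by rewrite /YY big_ord_recl /= Y0 expr0n /= add0r.
have h2 : 2 * lam * S <= lam ^+ 2 * YY + E.
  rewrite Sform YYs /E mulrN mulr_sumr mulr_sumr -big_split /= -sumrN.
  apply: ler_sum => j _.
  have := sqr_ge0 (lam * Y j.+1 + e j).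
  nra.
have h1 : lam * YY <= S by rewrite SY.
have h3 : lam ^+ 2 * YY <= lam * S by rewrite expr2 -mulrA ler_wpM2l // ltW.
nra.
Qed.

Lemma diff2_inv (k : nat) (e : nat -> R) :
  exists u : nat -> R, (forall i, (i < k.+1)%N -> u i - 2 * u i.+1 + u i.+2 = e i) /\
    (2 - 2 * cos (pi / k.+3%:R)) * (2 - 2 * cos (pi / k.+2%:R)) * \sum_(i < k.+3) u i ^+ 2
      <= \sum_(i < k.+1) e i ^+ 2.
Proof.
have [v [hv1 hv2]] := @diff1_inv k.+2 e isT.
have [u [hu1 hu2]] := @diff1_inv k.+3 v isT.
exists u; split.
  move=> i ik.
  rewrite -hv1 // -hu1 ?(ltn_trans ik) // -hu1 /=; last by apply: (ltn_trans ik).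
  ring.
have l2 := @lam_pos k.+2 isT.
set l3 := 2 - 2 * cos (pi / k.+3%:R).
set l2' := 2 - 2 * cos (pi / k.+2%:R).
have -> : l3 * l2' * \sum_(i < k.+3) u i ^+ 2 = l2' * (l3 * \sum_(i < k.+3) u i ^+ 2) by ring.
apply: le_trans hv2.
by apply: ler_wpM2l; [exact: ltW | exact: hu2].
Qed.

Lemma thresh (m k : nat) (g : 'I_m -> R) (B : {set 'I_m}) : (0 < k)%N -> (k <= m)%N ->
  (forall i j : 'I_m, (i <= j)%N -> g i <= g j) ->
  #|B| = #|[set j : 'I_m | (j < k)%N]| ->
  \sum_(j in [set j : 'I_m | (j < k)%N]) g j <= \sum_(j in B) g j.
Proof.
move=> k0 km mono cB.
set P := [set j : 'I_m | (j < k)%N].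
have k1 : (k.-1 < m)%N by rewrite prednK.
set tau := g (Ordinal k1).
pose h j := g j - tau.
pose f j := if h j <= 0 then h j else 0.
have eg (A : {set 'I_m}) : \sum_(j in A) g j = \sum_(j in A) h j + tau *+ #|A|.
  by rewrite -sumr_const -big_split /=; apply: eq_bigr => j _; rewrite /h subrK.
rewrite !eg cB lerD2r.
have e1 : \sum_(j in P) h j = \sum_j f j.
  rewrite big_mkcond /=; apply: eq_bigr => j _; rewrite /f inE.
  case: ifP => jk.
    have -> : h j <= 0 by rewrite /h subr_le0 mono //= -ltnS prednK.
    done.
  case: ifP => // hj; apply/eqP; rewrite eq_le hj /h subr_ge0 mono //=.
  by move/negbT: jk; rewrite -leqNgt; apply: leq_trans; apply: leq_pred.
rewrite e1 (bigID (fun j => j \in B)) /=.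
have -> : \sum_(i | i \notin B) f i = - \sum_(i | i \notin B) - f i by rewrite sumrN opprK.
rewrite -[X in _ <= X]addr0 lerD //.
  by apply: ler_sum => j _; rewrite /f; case: ifP => // /negbT; rewrite -ltNge => /ltW.
rewrite oppr_le0 sumr_ge0 // => j _; rewrite /f oppr_ge0; case: ifP => //.
Qed.

Lemma T_perm (m K : nat) (z : 'cV[R]_m) : (K < m)%N ->
  exists p : 'S_m,
    trunc_l1 K z = \sum_(j in [set j : 'I_m | (j < m - K)%N]) `|z (p j) 0| /\
    (forall i j : 'I_m, (i <= j)%N -> `|z (p i) 0| <= `|z (p j) 0|).
Proof.
move=> Km.
pose t := [tuple `|z i 0| | i < m].
set s := [seq `|z i 0| | i <- enum 'I_m].
have st : s = val t by [].
have pe : perm_eq (sort <=%R s) t by rewrite perm_sort st perm_refl.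
have [p hp] := tuple_permP pe.
have hnth (j : 'I_m) : nth 0 (sort <=%R s) j = `|z (p j) 0|.
  by rewrite hp nth_mktuple tnth_mktuple.
have sz : size (sort <=%R s) = m by rewrite size_sort size_map size_enum_ord.
exists p; split.
  rewrite /trunc_l1 -/s (big_nth 0) size_takel ?sz ?leq_subr //.
  rewrite big_mkord (big_ord_widen m (fun i => nth 0 (take (m - K) (sort <=%R s)) i)) ?leq_subr //.
  apply: congr_big => // [j|j]; first by rewrite inE.
  by move=> jk; rewrite nth_take // hnth.
move=> i j ij; rewrite -!hnth.
apply: (sorted_leq_nth le_trans le_refl); rewrite ?inE ?sz //.
exact: (sort_sorted le_total).
Qed.

Lemma T_select (m K : nat) (z : 'cV[R]_m) : (K < m)%N ->
  exists S : {set 'I_m}, trunc_l1 K z = \sum_(i in S) `|z i 0| /\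
    forall z' : 'cV[R]_m, trunc_l1 K z' <= \sum_(i in S) `|z' i 0|.
Proof.
move=> Km.
have [p [hp _]] := @T_perm m K z Km.
set P := [set j : 'I_m | (j < m - K)%N].
exists (p @: P); split.
  by rewrite hp big_imset //; move=> x y _ _; apply: perm_inj.
move=> z'.
have [q [hq mq]] := @T_perm m K z' Km.
rewrite hq.
have -> : \sum_(i in p @: P) `|z' i 0| = \sum_(j in (fun i => (q^-1)%g i) @: (p @: P)) `|z' (q j) 0|.
  rewrite [in RHS]big_imset /=; last by move=> x y _ _; apply: perm_inj.
  by apply: eq_bigr => i _; rewrite permKV.
apply: (@thresh m (m - K) (fun j => `|z' (q j) 0|)) => //.
- by rewrite subn_gt0.
- by rewrite leq_subr.
- by rewrite (card_imset _ (@perm_inj _ _)) (card_imset _ (@perm_inj _ _)).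
Qed.
End A.

Section DD.
Local Open Scope classical_set_scope.
Lemma dd_bound (R : realType) (N : nat) (f : 'cV[R]_N -> R) x d l (A B : R) :
  dir_deriv_is f x d l ->
  (forall t : R, 0 < t -> t < 1 -> (f (x + t *: d) - f x) / t <= A + t * B) ->
  l <= A.
Proof.
move=> hl hb.
have hg : (fun t : R => A + t * B) @ 0^'+ --> A.
  apply: cvg_at_right_filter.
  have h0 : (fun t : R => A + t * B) @ 0 --> A + 0 * B.
    apply: cvgD; first exact: cvg_cst.
    apply: cvgMl; exact: cvg_id.
  by rewrite mul0r addr0 in h0.
apply: (ler_cvg_to hl hg).
near=> t; apply: hb.
  by near: t; exact: nbhs_right_gt.
by near: t; exact: nbhs_right_lt.
Unshelve. all: by end_near.
Qed.

End DD.

Section B.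
Variable R : realType.

Lemma norm2E (N : nat) (v : 'cV[R]_N) : norm2 v ^+ 2 = \sum_(i < N) v i 0 ^+ 2.
Proof. by rewrite /norm2 sqr_sqrtr // sumr_ge0 // => i _; apply: sqr_ge0. Qed.

Lemma dir_step (N K : nat) (b x d : 'cV[R]_N) (gamma T : R) :
  0 <= gamma -> trunc_l1 K (diff2 R N *m x) = T ->
  (forall t : R, 0 < t -> t < 1 -> trunc_l1 K (diff2 R N *m (x + t *: d)) <= (1 - t) * T) ->
  d_stationary (objective K b gamma) x ->
  \sum_(i < N) (b - x) i 0 * d i 0 + gamma * T <= 0.
Proof.
move=> g0 hT ht hst.
have [l [hl l0]] := hst d.
set Srd := \sum_(i < N) (b - x) i 0 * d i 0.
set Sdd := \sum_(i < N) d i 0 ^+ 2.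
set Srr := \sum_(i < N) (b - x) i 0 ^+ 2.
suff : l <= - Srd - gamma * T by lra.
apply: (@dd_bound R N _ x d l _ (Sdd / 2) hl) => t t0 t1.
rewrite ler_pdivrMr //.
rewrite /objective !norm2E hT.
have e : \sum_(i < N) (b - (x + t *: d)) i 0 ^+ 2 = Srr - 2 * t * Srd + t ^+ 2 * Sdd.
  rewrite /Srr /Srd /Sdd !mulr_sumr -sumrB -big_split /=.
  by apply: eq_bigr => i _; rewrite !mxE; ring.
rewrite e.
have h := ht t t0 t1.
have h2 : gamma * trunc_l1 K (diff2 R N *m (x + t *: d)) <= gamma * ((1 - t) * T).
  by apply: ler_wpM2l.
have -> : \sum_(i < N) (b - x) i 0 ^+ 2 = Srr by [].
nra.
Qed.
End B.

Section C.
Variable R : realType.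
Lemma diff2E (k p : nat) (A : 'M[R]_(k.+3, p)) (i : 'I_(k.+3 - 2)) (j : 'I_p) :
  (diff2 R k.+3 *m A) i j = A (inord i) j - 2 * A (inord i.+1) j + A (inord i.+2) j.
Proof.
have hi : (i < k.+1)%N by have := ltn_ord i.
have e0 : ((inord i : 'I_k.+3) : nat) = i by rewrite inordK // (ltn_trans hi).
have e1 : ((inord i.+1 : 'I_k.+3) : nat) = i.+1 by rewrite inordK // ltnS (ltn_trans hi).
have e2 : ((inord i.+2 : 'I_k.+3) : nat) = i.+2 by rewrite inordK.
rewrite mxE (bigD1 (inord i)) //= (bigD1 (inord i.+1)) /=; last first.
  by apply/eqP => /(congr1 (@nat_of_ord _)); rewrite e1 e0; lia.
rewrite (bigD1 (inord i.+2)) /=; last first.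
  apply/andP; split; apply/eqP => /(congr1 (@nat_of_ord _)).
    by rewrite e2 e0; lia.
  by rewrite e2 e1; lia.
rewrite big1 ?addr0.
  rewrite /diff2 !mxE e0 e1 e2 eqxx /=.
  rewrite (gtn_eqF (ltnSn i)) (gtn_eqF (ltnSn i.+1)) (gtn_eqF (leqnSn i.+1)) !eqxx.
  ring.
move=> l /andP [/andP [h0 h1] h2].
rewrite /diff2 !mxE.
have n0 : (l : nat) != i by apply: contra h0 => /eqP e; apply/eqP/val_inj; rewrite /= e0.
have n1 : (l : nat) != i.+1 by apply: contra h1 => /eqP e; apply/eqP/val_inj; rewrite /= e1.
have n2 : (l : nat) != i.+2 by apply: contra h2 => /eqP e; apply/eqP/val_inj; rewrite /= e2.
by rewrite (negbTE n0) (negbTE n1) (negbTE n2) mul0r.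
Qed.

Lemma diff2_design (k : nat) : diff2 R k.+3 *m design R k.+3 = 0.
Proof.
apply/matrixP => i j; rewrite diff2E !mxE.
have hi : (i < k.+1)%N by have := ltn_ord i.
rewrite !inordK //; last 2 first.
- by rewrite ltnS (ltn_trans hi).
- by rewrite (ltn_trans hi).
case: ifP => _; first ring.
by rewrite -!natr1; ring.
Qed.
End C.

Section D.
Variable R : realType.
Lemma CS (N : nat) (f g : 'I_N -> R) :
  (\sum_i f i * g i) ^+ 2 <= (\sum_i f i ^+ 2) * (\sum_i g i ^+ 2).
Proof.
rewrite -subr_ge0.
have e : \sum_i \sum_j (f i * g j - f j * g i) ^+ 2 =
   \sum_i \sum_j (f i ^+ 2 * g j ^+ 2) + \sum_i \sum_j (f j ^+ 2 * g i ^+ 2)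
   - 2 * \sum_i \sum_j (f i * g i * (f j * g j)).
  rewrite mulr_sumr -big_split -sumrB /=; apply: eq_bigr => i _.
  rewrite mulr_sumr -big_split -sumrB /=; apply: eq_bigr => j _.
  ring.
have -> : (\sum_i f i ^+ 2) * (\sum_i g i ^+ 2) - (\sum_i f i * g i) ^+ 2 =
   (\sum_i \sum_j (f i * g j - f j * g i) ^+ 2) / 2.
  rewrite e (exchange_big _ _ _ _ _ (fun i j => f j ^+ 2 * g i ^+ 2)) /=.
  rewrite expr2 !big_distrlr /=.
  set X := \sum_i _; set Y := \sum_i _.
  by field.
apply: divr_ge0 => //; apply: sumr_ge0 => i _; apply: sumr_ge0 => j _; exact: sqr_ge0.
Qed.

Lemma sq_sum (N : nat) (S : {set 'I_N}) (a : 'I_N -> R) : (forall i, 0 <= a i) ->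
  \sum_(i in S) a i ^+ 2 <= (\sum_(i in S) a i) ^+ 2.
Proof.
move=> a0; rewrite [X in _ <= X]expr2 mulr_suml; apply: ler_sum => i iS.
rewrite expr2 ler_wpM2l // (bigD1 i) //= lerDl sumr_ge0 //.
Qed.
End D.

Theorem mainTheorem10 (R : realType) (n K : nat) (b xstar : 'cV[R]_n) (gamma : R) :
  (3 <= n)%N -> (K <= n - 3)%N -> 0 < gamma ->
  d_stationary (objective K b gamma) xstar ->
  norm2 (b - bhat b) /
    (2 * Num.sqrt ((1 - cos (pi / n%:R)) * (1 - cos (pi / (n - 1)%:R)))) < gamma ->
  trunc_l1 K (diff2 R n *m xstar) = 0.
Proof.
move=> n3 Kn g0 hst hg.
case: n b xstar n3 Kn hst hg => [|[|[|k]]] // b x _ Kn hst hg.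
set z := diff2 R k.+3 *m x.
have Km : (K < k.+3 - 2)%N by move: Kn; rewrite !subSS !subn0.
have [S [hT hS]] := @T_select R (k.+3 - 2) K z Km.
set T := trunc_l1 K z.
have T0 : 0 <= T by rewrite /T hT sumr_ge0.
have Dbhat : diff2 R k.+3 *m bhat b = 0 by rewrite /bhat !mulmxA diff2_design !mul0mx.
have h1 := @dir_step R k.+3 K b x (bhat b - x) gamma T (ltW g0) erefl.
have {h1} h1 : \sum_(i < k.+3) (b - x) i 0 * (bhat b - x) i 0 + gamma * T <= 0.
  apply: h1 => // t t0 t1.
  have -> : diff2 R k.+3 *m (x + t *: (bhat b - x)) = (1 - t) *: z.
    by rewrite mulmxDr -scalemxAr mulmxBr Dbhat /z; apply/matrixP => i j; rewrite !mxE; ring.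
  apply: le_trans (hS _) _; rewrite /T hT mulr_sumr le_eqVlt; apply/orP; left; apply/eqP.
  by apply: eq_bigr => i _; rewrite mxE normrM ger0_norm // subr_ge0 ltW.
set r := b - x.
set Nb := norm2 (b - bhat b).
have hr : \sum_(i < k.+3) r i 0 ^+ 2 <= Nb ^+ 2.
  rewrite /Nb norm2E.
  have -> : \sum_(i < k.+3) (b - bhat b) i 0 ^+ 2 = \sum_(i < k.+3) r i 0 ^+ 2
      - 2 * \sum_(i < k.+3) r i 0 * (bhat b - x) i 0 + \sum_(i < k.+3) (bhat b - x) i 0 ^+ 2.
    rewrite mulr_sumr -sumrB -big_split /=; apply: eq_bigr => i _; rewrite !mxE; ring.
  have : 0 <= \sum_(i < k.+3) (bhat b - x) i 0 ^+ 2 by apply: sumr_ge0 => i _; apply: sqr_ge0.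
  have : 0 <= gamma * T by rewrite mulr_ge0 // ltW.
  lra.
pose ef (j : nat) := if (inord j : 'I_(k.+3 - 2)) \in S then z (inord j) 0 else 0.
have [u [hu1 hu2]] := @diff2_inv R k ef.
pose U : 'cV[R]_k.+3 := \col_i u i.
set W := diff2 R k.+3 *m U.
have DU : forall i : 'I_(k.+3 - 2), W i 0 = ef i.
  move=> i; rewrite /W diff2E !mxE.
  have hi : (i < k.+1)%N by have := ltn_ord i.
  rewrite !inordK; first by apply: hu1.
  - by [].
  - by rewrite ltnS (ltn_trans hi).
  - by rewrite (ltn_trans hi).
have h2 := @dir_step R k.+3 K b x (- U) gamma T (ltW g0) erefl.
have {h2} h2 : \sum_(i < k.+3) r i 0 * (- U) i 0 + gamma * T <= 0.
  apply: h2 => // t t0 t1.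
  have -> : diff2 R k.+3 *m (x + t *: - U) = z - t *: W.
    by rewrite mulmxDr -scalemxAr mulmxN scalerN.
  apply: le_trans (hS _) _; rewrite /T hT mulr_sumr le_eqVlt; apply/orP; left; apply/eqP.
  apply: eq_bigr => i iS.
  have -> : (z - t *: W) i 0 = z i 0 - t * W i 0 by rewrite !mxE.
  rewrite DU /ef inord_val iS.
  have -> : z i 0 - t * z i 0 = (1 - t) * z i 0 by ring.
  by rewrite normrM ger0_norm // subr_ge0 ltW.
set Suu := \sum_(i < k.+3) u i ^+ 2.
have hE : \sum_(i < k.+1) ef i ^+ 2 <= T ^+ 2.
  have -> : \sum_(i < k.+1) ef i ^+ 2 = \sum_(i in S) `|z i 0| ^+ 2.
    rewrite [RHS]big_mkcond /=; apply: eq_bigr => i _; rewrite /ef inord_val.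
    by case: ifP => _; [rewrite real_normK ?num_real | rewrite expr0n].
  by rewrite /T hT; apply: sq_sum => i; exact: normr_ge0.
have hsig := le_trans hu2 hE.
set C := \sum_(i < k.+3) r i 0 * u i.
have hC : gamma * T <= C.
  have e : \sum_(i < k.+3) r i 0 * (- U) i 0 = - C.
    rewrite /C -sumrN; apply: eq_bigr => i _.
    have -> : (- U) i 0 = - u i by rewrite !mxE.
    by rewrite mulrN.
  by rewrite e in h2; lra.
have hCS : C ^+ 2 <= (\sum_(i < k.+3) r i 0 ^+ 2) * Suu := @CS R k.+3 (fun i => r i 0) (fun i => u i).
have e1 : (k.+3 - 1)%N = k.+2 by rewrite subn1.
rewrite e1 in hg.
have l3 := @lam_pos R k.+3 isT.
have l2 := @lam_pos R k.+2 isT.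
set c3 := cos (pi / k.+3%:R) in l3 hg hsig.
set c2 := cos (pi / k.+2%:R) in l2 hg hsig.
set P := (1 - c3) * (1 - c2).
have P0 : 0 < P by rewrite /P mulr_gt0 //; lra.
set sg := 2 * Num.sqrt P.
have sq : Num.sqrt P ^+ 2 = P by rewrite sqr_sqrtr // ltW.
have sg0 : 0 < sg by rewrite /sg mulr_gt0 // sqrtr_gt0.
have sg2 : sg ^+ 2 = (2 - 2 * c3) * (2 - 2 * c2) by rewrite /sg exprMn sq /P; ring.
rewrite -/sg ltr_pdivrMr // in hg.
have Suu0 : 0 <= Suu by apply: sumr_ge0 => i _; apply: sqr_ge0.
have Nb0 : 0 <= Nb by rewrite /Nb /norm2 sqrtr_ge0.
apply/eqP; rewrite eq_le T0 andbT leNgt; apply/negP => Tpos.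
have s1 : (gamma * T) ^+ 2 <= C ^+ 2.
  have : 0 <= gamma * T by rewrite mulr_ge0 // ltW.
  move: hC; rewrite !expr2; nra.
have s2 : C ^+ 2 <= Nb ^+ 2 * Suu by apply: le_trans hCS _; rewrite ler_wpM2r.
have s3 : sg ^+ 2 * Suu <= T ^+ 2 by rewrite sg2.
have s4 : (gamma * sg) ^+ 2 * T ^+ 2 <= Nb ^+ 2 * T ^+ 2.
  have -> : (gamma * sg) ^+ 2 * T ^+ 2 = sg ^+ 2 * (gamma * T) ^+ 2 by ring.
  apply: le_trans (_ : sg ^+ 2 * (Nb ^+ 2 * Suu) <= _).
    by rewrite ler_wpM2l ?sqr_ge0 // (le_trans s1 s2).
  have -> : sg ^+ 2 * (Nb ^+ 2 * Suu) = Nb ^+ 2 * (sg ^+ 2 * Suu) by ring.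
  by rewrite ler_wpM2l ?sqr_ge0.
have s5 : (gamma * sg) ^+ 2 <= Nb ^+ 2.
  by move: s4; rewrite ler_pM2r // exprn_gt0.
have : Nb ^+ 2 < (gamma * sg) ^+ 2 by rewrite ltr_pXn2r // nnegrE mulr_ge0 // ltW.
by rewrite ltNge s5.
Qed.
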